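(* Let $A_1,A_2,A_3\in\mathbb{R}^n_s$ be three distinct points lying on a gyrocircle in the Einstein gyrovector space $\mathbb{R}^n_s$, such that the gyrosecant gyroline through $A_2,A_3$ and the gyrotangent gyroline of the gyrocircle with tangency point $A_1$ share a point $P$ not on the gyrocircle. Let $d_k=\|\ominus A_k\oplus P\|$ for $k=1,2,3$ and $d_{23}=\|\ominus A_2\oplus A_3\|$ (when $A_2$ lies between $P$ and $A_3$, one has $d_{23}=d_3\ominus d_2$, where for reals $a\ominus b=(a-b)/(1-ab/s^2)$). Then $$\gamma_{d_1}^2d_1^2=\frac{2}{\gamma_{d_{23}}+1}\,\gamma_{d_2}d_2\,\gamma_{d_3}d_3 .$$
   Context: Fix $s>0$, $n\ge2$; $\mathbb{R}^n_s=\{v\in\mathbb{R}^n:\|v\|<s\}$ with Einstein addition $u\oplus v=\frac{1}{1+u\cdot v/s^2}\{u+\frac{1}{\gamma_u}v+\frac{1}{s^2}\frac{\gamma_u}{1+\gamma_u}(u\cdot v)u\}$, $\gamma_v=(1-\|v\|^2/s^2)^{-1/2}$ and for real $0\le a<s$, $\gamma_a=(1-a^2/s^2)^{-1/2}$; $\ominus v=-v$. Gyrodistance between $A,B$: $\|\ominus A\oplus B\|$. Gyrolines are intersections of Euclidean lines with the ball. A gyroplane is $(A_1\oplus\mathrm{span}\{\ominus A_1\oplus A_2,\ominus A_1\oplus A_3\})\cap\mathbb{R}^n_s$ for $\ominus A_1\oplus A_2,\ominus A_1\oplus A_3$ linearly independent; a gyrocircle with gyrocenter $O$ and gyroradius $r>0$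 is the set of points of a gyroplane containing $O$ at gyrodistance $r$ from $O$. A gyrosecant gyroline meets the gyrocircle in two different points; a gyrotangent gyroline is a gyroline in the gyroplane of the gyrocircle meeting it in exactly one point (the tangency point). *)

(* Defs.v *)
From HB Require Import structures.
From mathcomp Require Import all_boot all_order all_algebra.
From mathcomp Require Import reals.
Set Implicit Arguments. Unset Strict Implicit. Unset Printing Implicit Defensive.
Import Order.TTheory GRing.Theory Num.Theory.
Local Open Scope ring_scope.

Section Einstein.
Variables (R : realType) (n : nat) (s : R).
Notation vec := 'rV[R]_n.

Definition dot (u v : vec) : R := \sum_(i < n) u ord0 i * v ord0 i.
Definition enorm (v : vec) : R := Num.sqrt (dot v v).

Definition inball (v : vec) : Prop := enorm v < s.

Definition gammaR (a : R) : R := (Num.sqrt (1 - a ^+ 2 / s ^+ 2))^-1.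
Definition gammaV (v : vec) : R := gammaR (enorm v).

Definition eadd (u v : vec) : vec :=
  (1 + dot u v / s ^+ 2)^-1 *:
    (u + (gammaV u)^-1 *: v
       + (s ^+ 2)^-1 * (gammaV u / (1 + gammaV u)) * dot u v *: u).

Definition gyrodist (A B : vec) : R := enorm (eadd (- A) B).

(* gyroline through two distinct points Q1 Q2 of the ball:
   the Euclidean line through them intersected with the ball *)
Definition gyroline (Q1 Q2 : vec) (X : vec) : Prop :=
  inball X /\ exists t : R, X = Q1 + t *: (Q2 - Q1).

Definition linindep2 (w1 w2 : vec) : Prop :=
  forall a b : R, a *: w1 + b *: w2 = 0 -> a = 0 /\ b = 0.

Definition gyroplane_data (A1 A2 A3 : vec) : Prop :=
  [/\ inball A1, inball A2, inball A3 &
      linindep2 (eadd (- A1) A2) (eadd (- A1) A3)].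

(* gyroplane (A1 (+) span{(-)A1(+)A2, (-)A1(+)A3}) /\ R^n_s;
   the span vector w is taken in the ball *)
Definition gyroplane (A1 A2 A3 : vec) (X : vec) : Prop :=
  inball X /\
  exists a b : R,
    let w := a *: eadd (- A1) A2 + b *: eadd (- A1) A3 in
    inball w /\ X = eadd A1 w.

(* gyrocircle with gyrocenter O, gyroradius r, in the gyroplane given by
   B1 B2 B3 (which must contain O) *)
Definition gyrocircle (B1 B2 B3 O : vec) (r : R) (X : vec) : Prop :=
  gyroplane B1 B2 B3 X /\ gyrodist O X = r.

End Einstein.

(* Main.v *)
Require Import Defs.
From HB Require Import structures.
From mathcomp Require Import all_boot all_order all_algebra.
From mathcomp Require Import reals.
From mathcomp Require Import ring lra.
Import Order.TTheory GRing.Theory Num.Theory.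
Local Open Scope ring_scope.
Set Implicit Arguments. Unset Strict Implicit.

Lemma circ_sq {R : realType} (a b c m k t l : R) :
  l^+2 * (1 + 2* m * t - k * t^+2) = 1 -> l * (a + b * t) = c ->
  (a+b * t)^+2 = c^+2 * (1 + 2* m * t - k * t^+2).
Proof. by move=> hN hc; rewrite -hc exprMn mulrAC hN mul1r. Qed.

Lemma final_scalar (R : realType) (s a c m k b m' k' b' t1 t2 t3 l1 l2 l3 X1 X2 X3 : R) :
  0 < s -> 0 < c -> 0 < k -> 0 <= k' -> t2 != t3 ->
  0 < l2 -> l2^+2 * (1 + 2* m * t2 - k * t2^+2) = 1 -> l2 * (a + b * t2) = c ->
  0 < l3 -> l3^+2 * (1 + 2* m * t3 - k * t3^+2) = 1 -> l3 * (a + b * t3) = c ->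
  l1^+2 * (1 + 2* m' * t1 - k' * t1^+2) = 1 -> l1 * (a + b' * t1) = c ->
  (b'^+2 + c^+2 * k') * t1 = - (a * b' - c^+2* m') ->
  X1^+2 = s^+2 * ((l1 * (1 + m' * t1))^+2 - 1) ->
  0 <= X2 -> X2^+2 = s^+2 * ((l2 * (1 + m * t2))^+2 - 1) ->
  0 <= X3 -> X3^+2 = s^+2 * ((l3 * (1 + m * t3))^+2 - 1) ->
  X1^+2 = 2 / (l2 * l3 * (1 + m * (t2+t3) - k * (t2 * t3)) + 1) * X2 * X3.
Proof.
move=> hs hc hk hk' ht hl2 hN2 hc2 hl3 hN3 hc3 hN1 hc1 htan hX1 hX2p hX2 hX3p hX3.
have q2 := circ_sq hN2 hc2. have q3 := circ_sq hN3 hc3. have q1 := circ_sq hN1 hc1.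
set D := b^+2 + c^+2 * k.
have hD : 0 < D.
  have h1 : 0 < c^+2 * k by rewrite mulr_gt0 // exprn_gt0.
  rewrite /D; have := sqr_ge0 b; lra.
have hS : D * (t2+t3) = -2 * (a * b - c^+2* m).
  have : (t2 - t3) * (D * (t2+t3) + 2 * (a * b - c^+2* m)) = 0.
    rewrite /D. lra.
  move/eqP; rewrite mulf_eq0 subr_eq0 (negbTE ht) /= => /eqP. lra.
have hP : D * (t2 * t3) = a^+2 - c^+2.
  have := congr1 (fun x => t2 * x) hS; rewrite /D /= => h; lra.
have hC : a^+2 - c^+2 = (b'^+2 + c^+2 * k') * t1^+2.
  have e : (b'^+2 + c^+2 * k') * t1^+2 = - (a * b' - c^+2* m') * t1 by rewrite -htan; ring.
  lra.
have hPp : 0 <= t2 * t3.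
  have : 0 <= (b'^+2 + c^+2 * k') * t1^+2 by rewrite mulr_ge0 // ?sqr_ge0 // addr_ge0 ?sqr_ge0 // mulr_ge0 // sqr_ge0.
  rewrite -hC -hP. rewrite pmulr_rge0 //.
have hac : a + b' * t1 != 0 by apply/eqP => h; move: hc1; rewrite h mulr0 => h'; move: hc; rewrite -h' ltxx.
have hG1 : l1 * (1 + m' * t1) = a / c.
  have hl1 : l1 = c / (a + b' * t1) by rewrite -hc1 mulfK.
  have e : c^+2 * (1 + m' * t1) = a * (a + b' * t1).
    have := congr1 (fun x => t1 * x) htan => /= h. lra.
  have cn : c != 0 by rewrite gt_eqF.
  rewrite hl1.
  transitivity (c^+2 * (1 + m' * t1) / (c * (a + b' * t1))).
    by field; rewrite hac cn.
  by rewrite e; field; rewrite hac cn.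
have hX1' : X1^+2 = s^+2 * (a^+2 - c^+2) / c^+2.
  rewrite hX1 hG1. field. by rewrite gt_eqF.
have hX23 : X2 * X3 = s^+2 * (l2 * l3 * (t2 * t3) * (m^+2 + k)).
  have h0 : 0 <= s^+2 * (l2 * l3 * (t2 * t3) * (m^+2 + k)).
    rewrite mulr_ge0 ?sqr_ge0 //; apply: mulr_ge0.
      by apply: mulr_ge0 => //; apply: mulr_ge0; exact: ltW.
    have := sqr_ge0 m; lra.
  have hm : 0 <= X2 * X3 by rewrite mulr_ge0.
  have e2 : (l2 * (1 + m * t2))^+2 - 1 = l2^+2 * t2^+2 * (m^+2 + k).
    rewrite -{2}hN2; ring.
  have e3 : (l3 * (1 + m * t3))^+2 - 1 = l3^+2 * t3^+2 * (m^+2 + k).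
    rewrite -{2}hN3; ring.
  have : (X2 * X3)^+2 = (s^+2 * (l2 * l3 * (t2 * t3) * (m^+2 + k)))^+2.
    by rewrite exprMn hX2 hX3 e2 e3; ring.
  move: h0 hm; set u := X2 * X3; set v := s^+2 * _. move=> h0 hm huv. nra.
set E := a^+2 * k + 2 * a*b* m - b^+2.
have hE : l2 * l3 * E = D.
  have e1 : D * ((a+b * t2) * (a+b * t3)) = c^+2 * E.
    have -> : D * ((a+b * t2) * (a+b * t3)) = D * a^+2 + a * b*(D * (t2+t3)) + b^+2 * (D * (t2 * t3)) by ring.
    rewrite hS hP /E /D; ring.
  have e2 : l2 * l3 * ((a+b * t2) * (a+b * t3)) = c^+2 by rewrite expr2 -{1}hc2 -hc3; ring.
  have hc2' : c^+2 != 0 by rewrite gt_eqF // exprn_gt0.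
  apply: (mulfI hc2').
  transitivity (l2 * l3 * (c^+2 * E)); first by ring.
  rewrite -e1.
  transitivity (l2 * l3 * ((a+b * t2) * (a+b * t3)) * D); first by ring.
  by rewrite e2.
have key : D * (l2 * l3 * (1 + m * (t2+t3) - k * (t2 * t3)) + 1) = 2 * c^+2 * l2 * l3 * (m^+2+k).
  have -> : D * (l2 * l3 * (1 + m * (t2+t3) - k * (t2 * t3)) + 1)
     = l2 * l3 * (D + m * (D * (t2+t3)) - k * (D * (t2 * t3))) + D by ring.
  rewrite hS hP -{2}hE /D /E; ring.
have hG : l2 * l3 * (1 + m * (t2+t3) - k * (t2 * t3)) + 1 != 0.
  apply/eqP => h.
  have : 0 < 2 * c^+2 * l2 * l3 * (m^+2 + k).
    rewrite !mulr_gt0 ?exprn_gt0 //.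
    have := sqr_ge0 m; lra.
  by rewrite -key h mulr0 ltxx.
have Dn : D != 0 by rewrite gt_eqF.
have cn : c != 0 by rewrite gt_eqF.
have l2n : l2 != 0 by rewrite gt_eqF.
have l3n : l3 != 0 by rewrite gt_eqF.
have mkn : m^+2 + k != 0 by rewrite gt_eqF //; have := sqr_ge0 m; lra.
rewrite hX1' -[2 / _ * X2 * X3]mulrA hX23.
rewrite (_ : l2 * l3 * (1 + m * (t2+t3) - k * (t2 * t3)) + 1 = 2 * c^+2 * l2 * l3 * (m^+2 + k) / D); last first.
  by rewrite -key; field.
rewrite -hP. field. by rewrite Dn cn l2n l3n mkn.
Qed.


Section Vec.
Variables (R : realType) (n : nat).
Implicit Types u v w : 'rV[R]_n.

Lemma dotC u v : dot u v = dot v u.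
Proof. by apply: eq_bigr => i _; rewrite mulrC. Qed.
Lemma dotDl u v w : dot (u + v) w = dot u w + dot v w.
Proof. by rewrite /dot -big_split; apply: eq_bigr => i _; rewrite !mxE mulrDl. Qed.
Lemma dotZl (a : R) u v : dot (a *: u) v = a * dot u v.
Proof. by rewrite /dot mulr_sumr; apply: eq_bigr => i _; rewrite !mxE mulrA. Qed.
Lemma dotNl u v : dot (- u) v = - dot u v.
Proof. by rewrite /dot -sumrN; apply: eq_bigr => i _; rewrite !mxE mulNr. Qed.
Lemma dotDr u v w : dot w (u + v) = dot w u + dot w v.
Proof. by rewrite dotC dotDl !(dotC w). Qed.
Lemma dotZr (a : R) u v : dot v (a *: u) = a * dot v u.
Proof. by rewrite dotC dotZl dotC. Qed.
Lemma dotNr u v : dot v (- u) = - dot v u.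
Proof. by rewrite dotC dotNl dotC. Qed.
Lemma dot_ge0 u : 0 <= dot u u.
Proof. by apply: sumr_ge0 => i _; rewrite -expr2 sqr_ge0. Qed.
Lemma dot_eq0 u : dot u u = 0 -> u = 0.
Proof.
move=> h; apply/rowP => i; rewrite mxE.
have H : forall j : 'I_n, true -> 0 <= u ord0 j * u ord0 j by move=> j _; rewrite -expr2 sqr_ge0.
have := @psumr_eq0P _ _ (fun _ => true) (fun j => u ord0 j * u ord0 j) H h i isT.
by move/eqP; rewrite mulf_eq0 orbb => /eqP; rewrite (ord1 0).
Qed.
Lemma dot_le u v : 2 * dot u v <= dot u u + dot v v.
Proof.
have := dot_ge0 (u - v).
rewrite !dotDl !dotDr !dotNl !dotNr (dotC v u). lra.
Qed.
End Vec.


Lemma sq_uniq (R : realType) (x y : R) : 0 <= x -> 0 <= y -> x^+2 = y^+2 -> x = y.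
Proof. move=> hx hy h; nra. Qed.

Section Gyro.
Variables (R : realType) (n : nat) (s : R).
Hypothesis hs : 0 < s.
Implicit Types u v w : 'rV[R]_n.

Definition Fv u := 1 - dot u u / s^+2.

Lemma enorm2 u : enorm u ^+ 2 = dot u u.
Proof. by rewrite /enorm sqr_sqrtr // dot_ge0. Qed.
Lemma enorm_ge0 u : 0 <= enorm u.
Proof. exact: sqrtr_ge0. Qed.

Lemma s2_gt0 : 0 < s^+2. Proof. exact: exprn_gt0. Qed.
Lemma sn0 : s != 0. Proof. by rewrite gt_eqF. Qed.

Lemma inballE u : inball s u <-> dot u u < s^+2.
Proof.
rewrite /inball -enorm2 !expr2; have := enorm_ge0 u; have := hs; split => h; nra.
Qed.

Lemma Fv_gt0 u : inball s u -> 0 < Fv u.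
Proof.
move/inballE => h; rewrite /Fv subr_gt0 ltr_pdivrMr ?mul1r //; exact: s2_gt0.
Qed.

Lemma gammaRsq x : 0 < 1 - x^+2 / s^+2 -> gammaR s x ^+ 2 = (1 - x^+2 / s^+2)^-1 /\ 0 < gammaR s x.
Proof.
move=> h; rewrite /gammaR exprVn sqr_sqrtr ?ltW //; split => //.
by rewrite invr_gt0 sqrtr_gt0.
Qed.

Lemma gammaV_prop u : inball s u -> gammaV s u ^+ 2 * Fv u = 1 /\ 0 < gammaV s u.
Proof.
move=> hu; have hF := Fv_gt0 hu.
have := @gammaRsq (enorm u); rewrite enorm2 => /(_ hF) [h1 h2].
by rewrite /gammaV h1 mulVf ?gt_eqF.
Qed.

Lemma eaddF u v : inball s u -> inball s v ->
  1 - dot (eadd s u v) (eadd s u v) / s^+2 = Fv u * Fv v / (1 + dot u v / s^+2)^+2.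
Proof.
move=> hu hv.
have [hg1 hg2] := gammaV_prop hu.
have hF := Fv_gt0 hu.
have he : 0 < 1 + dot u v / s^+2.
  have := dot_le (- u) v; rewrite dotNl !dotNr dotNl opprK.
  move/inballE: hu; move/inballE: hv => hv hu h.
  have : - dot u v < s^+2 by lra.
  move=> h'; have -> : 1 + dot u v / s^+2 = (s^+2 + dot u v) / s^+2.
    by field; rewrite sn0.
  rewrite divr_gt0 //; [lra | exact: s2_gt0].
rewrite /eadd.
set g := gammaV s u.
rewrite !dotZl !dotZr !dotDl !dotDr !dotZl !dotZr (dotC v u).
have gn : g != 0 by rewrite gt_eqF.
have hi : (g^+2)^-1 = Fv u.
  apply: (@mulfI _ (g^+2)); first by rewrite expf_neq0.
  by rewrite mulfV ?expf_neq0 // hg1.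
have huu : dot u u = s^+2 * (1 - (g^+2)^-1).
  by rewrite hi /Fv; field; rewrite sn0.
rewrite /Fv huu.
have g1n : 1 + g != 0 by rewrite gt_eqF // addr_gt0.
have sn : s != 0 by rewrite gt_eqF.
have en := negbT (gt_eqF he).
have en2 : s^+2 + dot u v != 0.
  have -> : s^+2 + dot u v = s^+2 * (1 + dot u v / s^+2) by field; rewrite ?sn0.
  by rewrite mulf_neq0 // expf_neq0.
by field; rewrite sn en2 gn g1n.
Qed.

Lemma dot_lt u v : inball s u -> inball s v -> 0 < 1 - dot u v / s^+2.
Proof.
move=> /inballE hu /inballE hv; have := dot_le u v => h.
have h' : dot u v < s^+2 by lra.
have -> : 1 - dot u v / s^+2 = (s^+2 - dot u v) / s^+2 by field; rewrite ?sn0.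
rewrite divr_gt0 //; [lra | exact: s2_gt0].
Qed.

Lemma gyro_gamma u v : inball s u -> inball s v ->
  gammaR s (gyrodist s u v) = gammaV s u * gammaV s v * (1 - dot u v / s^+2)
  /\ 0 <= gyrodist s u v < s.
Proof.
move=> hu hv.
have hnu : inball s (- u) by rewrite /inball /enorm dotNl dotNr opprK.
have hF := eaddF hnu hv.
rewrite dotNl (_ : Fv (- u) = Fv u) in hF; last by rewrite /Fv dotNl dotNr opprK.
have hd : 0 < 1 - gyrodist s u v ^+2 / s^+2.
  rewrite /gyrodist enorm2 hF.
  apply: divr_gt0; first by apply: mulr_gt0; apply: Fv_gt0.
  apply: exprn_gt0.
  rewrite (_ : 1 + - dot u v / s^+2 = 1 - dot u v / s^+2); last by rewrite mulNr.
  exact: dot_lt.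
have [g1 g2] := gammaRsq hd.
have [hu1 hu2] := gammaV_prop hu.
have [hv1 hv2] := gammaV_prop hv.
have hl := dot_lt hu hv.
split; last first.
  apply/andP; split; first exact: enorm_ge0.
  have := enorm_ge0 (eadd s (- u) v); rewrite -/(gyrodist s u v) => h0.
  have : gyrodist s u v ^+2 < s^+2.
    move: hd; rewrite subr_gt0 ltr_pdivrMr ?mul1r //; exact: s2_gt0.
  rewrite !expr2 => h1. have := hs. nra.
apply: sq_uniq; first exact: ltW.
  by rewrite !mulr_ge0 ?ltW.
rewrite g1 /gyrodist enorm2 hF !exprMn.
rewrite (_ : 1 + - dot u v / s^+2 = 1 - dot u v / s^+2); last by rewrite mulNr.
have fu := Fv_gt0 hu. have fv := Fv_gt0 hv.
have -> : gammaV s u ^+2 = (Fv u)^-1.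
  by apply: (@mulIf _ (Fv u)); rewrite ?gt_eqF // hu1 mulVf ?gt_eqF.
have -> : gammaV s v ^+2 = (Fv v)^-1.
  by apply: (@mulIf _ (Fv v)); rewrite ?gt_eqF // hv1 mulVf ?gt_eqF.
have h3 : s^+2 - dot u v != 0.
  have -> : s^+2 - dot u v = s^+2 * (1 - dot u v / s^+2) by field; rewrite ?sn0.
  by rewrite mulf_neq0 ?expf_neq0 ?sn0 // gt_eqF.
by field; rewrite sn0 h3 !gt_eqF.
Qed.

Lemma gammaR_inj x y : 0 <= x < s -> 0 <= y < s -> gammaR s x = gammaR s y -> x = y.
Proof.
move=> /andP[x0 x1] /andP[y0 y1] h.
have pos z : 0 <= z -> z < s -> 0 < 1 - z^+2 / s^+2.
  move=> z0 z1; rewrite subr_gt0 ltr_pdivrMr ?mul1r; last exact: s2_gt0.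
  rewrite !expr2; have := hs; nra.
have [gx _] := gammaRsq (pos _ x0 x1).
have [gy _] := gammaRsq (pos _ y0 y1).
have : (1 - x^+2 / s^+2)^-1 = (1 - y^+2 / s^+2)^-1 by rewrite -gx -gy h.
move/invr_inj => e.
apply: sq_uniq => //.
have : x^+2 / s^+2 = y^+2 / s^+2 by lra.
by move/(mulIf (invr_neq0 (negbT (gt_eqF s2_gt0)))).
Qed.

Lemma gammaR_sq x : 0 <= x < s -> (gammaR s x * x)^+2 = s^+2 * (gammaR s x ^+2 - 1).
Proof.
move=> /andP[x0 x1].
have hp : 0 < 1 - x^+2 / s^+2.
  rewrite subr_gt0 ltr_pdivrMr ?mul1r; last exact: s2_gt0.
  rewrite !expr2; have := hs; nra.
have [g1 _] := gammaRsq hp.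
rewrite exprMn g1.
set f := 1 - x^+2 / s^+2.
have -> : x^+2 = s^+2 * (1 - f) by rewrite /f; field; rewrite sn0.
by field; rewrite gt_eqF.
Qed.

Lemma gammaR_gt0 x : 0 <= x < s -> 0 < gammaR s x.
Proof.
move=> /andP[x0 x1].
have hp : 0 < 1 - x^+2 / s^+2.
  rewrite subr_gt0 ltr_pdivrMr ?mul1r; last exact: s2_gt0.
  rewrite !expr2; have := hs; nra.
by have [_ ->] := gammaRsq hp.
Qed.

End Gyro.



Section Line.
Variables (R : realType) (n : nat) (s : R).
Hypothesis hs : 0 < s.
Implicit Types u v w P O X Y : 'rV[R]_n.

Definition lm P w := - gammaV s P ^+2 * dot P w / s^+2.
Definition lk P w := gammaV s P ^+2 * dot w w / s^+2.
Definition la O P := gammaV s O * gammaV s P * (1 - dot O P / s^+2).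
Definition lb O P w := gammaV s O * gammaV s P * (- dot O w / s^+2).

Lemma dot_line P w t X : X = P + t *: w ->
  dot X X = dot P P + 2 * t * dot P w + t^+2 * dot w w.
Proof. move=> ->; rewrite !dotDl !dotDr !dotZl !dotZr (dotC w P); ring. Qed.
Lemma dot_line2 P w t t' X Y : X = P + t *: w -> Y = P + t' *: w ->
  dot X Y = dot P P + (t + t') * dot P w + (t * t') * dot w w.
Proof. move=> -> ->; rewrite !dotDl !dotDr !dotZl !dotZr (dotC w P); ring. Qed.
Lemma dot_lineO O P w t X : X = P + t *: w -> dot O X = dot O P + t * dot O w.
Proof. by move=> ->; rewrite dotDr dotZr. Qed.

Lemma hP1 P : inball s P -> gammaV s P ^+2 * (1 - dot P P / s^+2) = 1.
Proof. by move=> hP; have [] := gammaV_prop hs hP. Qed.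

Lemma line_N P w t X : inball s P -> X = P + t *: w ->
  1 + 2 * lm P w * t - lk P w * t^+2 = gammaV s P ^+2 * (1 - dot X X / s^+2).
Proof.
move=> hP hX; have h1 := hP1 hP.
rewrite (dot_line hX) /lm /lk. lra.
Qed.

Lemma line_O O P w t X : X = P + t *: w ->
  gammaV s O * gammaV s P * (1 - dot O X / s^+2) = la O P + lb O P w * t.
Proof. by move=> hX; rewrite (dot_lineO O hX) /la /lb; ring. Qed.

Lemma line_pair P w t t' X Y : inball s P -> X = P + t *: w -> Y = P + t' *: w ->
  gammaV s X * gammaV s Y * (1 - dot X Y / s^+2)
  = gammaV s X / gammaV s P * (gammaV s Y / gammaV s P)
     * (1 + lm P w * (t + t') - lk P w * (t * t')).
Proof.
move=> hP hX hY; have h1 := hP1 hP.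
have [_ gP] := gammaV_prop hs hP.
have gn : gammaV s P != 0 by rewrite gt_eqF.
have hi : (gammaV s P ^+2)^-1 = 1 - dot P P / s^+2.
  apply: (@mulfI _ (gammaV s P ^+2)); first by rewrite expf_neq0.
  by rewrite mulfV ?expf_neq0 // h1.
rewrite (dot_line2 hX hY) /lm /lk.
transitivity (gammaV s X * gammaV s Y * ((gammaV s P ^+2)^-1 - (t + t') * dot P w / s^+2
   - (t * t') * dot w w / s^+2)).
  by rewrite hi; field; rewrite sn0.
by field; rewrite ?sn0 ?gn.
Qed.

Lemma line_data O P w t X : inball s O -> inball s P -> inball s X -> X = P + t *: w ->
  [/\ (gammaV s X / gammaV s P)^+2 * (1 + 2 * lm P w * t - lk P w * t^+2) = 1,
      gammaV s O * gammaV s X * (1 - dot O X / s^+2)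
        = gammaV s X / gammaV s P * (la O P + lb O P w * t) &
      gammaV s X * gammaV s P * (1 - dot X P / s^+2)
        = gammaV s X / gammaV s P * (1 + lm P w * t)].
Proof.
move=> hO hP hXb hX.
have [_ gP] := gammaV_prop hs hP.
have gn : gammaV s P != 0 by rewrite gt_eqF.
split.
- rewrite (line_N hP hX) expr_div_n mulrA divfK ?expf_neq0 //.
  exact: hP1.
- rewrite -(line_O O hX); field; by rewrite ?sn0 ?gn.
- have := line_pair hP hX (_ : P = P + 0 *: w); rewrite scale0r addr0 => /(_ erefl) ->.
  rewrite mulr0 addr0 mulr0 subr0 divff // mulr1; field; by rewrite ?sn0 ?gn.
Qed.

End Line.

Unset Implicit Arguments.

Theorem mainTheorem4 (R : realType) (n : nat) (s : R)
  (B1 B2 B3 O : 'rV[R]_n) (r : R)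
  (A1 A2 A3 T1 T2 P : 'rV[R]_n) :
  (2 <= n)%N -> 0 < s ->
  gyroplane_data s B1 B2 B3 -> gyroplane s B1 B2 B3 O -> 0 < r ->
  gyrocircle s B1 B2 B3 O r A1 -> gyrocircle s B1 B2 B3 O r A2 ->
  gyrocircle s B1 B2 B3 O r A3 ->
  A1 != A2 -> A1 != A3 -> A2 != A3 ->
  inball s T1 -> inball s T2 -> T1 != T2 ->
  (forall X, gyroline s T1 T2 X -> gyroplane s B1 B2 B3 X) ->
  (forall X, gyroline s T1 T2 X /\ gyrocircle s B1 B2 B3 O r X <-> X = A1) ->
  gyroline s A2 A3 P -> gyroline s T1 T2 P ->
  ~ gyrocircle s B1 B2 B3 O r P ->
  let d1 := gyrodist s A1 P in
  let d2 := gyrodist s A2 P in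
  let d3 := gyrodist s A3 P in
  let d23 := gyrodist s A2 A3 in
  gammaR s d1 ^+ 2 * d1 ^+ 2
    = 2 / (gammaR s d23 + 1) * (gammaR s d2 * d2) * (gammaR s d3 * d3).
Proof.
move=> hn hs _ [hO _] hr [[hA1 _] hd1] [[hA2 _] hd2] [[hA3 _] hd3] n12 n13 n23
  hT1 hT2 nT hTpl hTiff [hP [t0 hPt0]] [_ [tP hPtP]] hPnot d1 d2 d3 d23.
set c := gammaR s r.
have circ X : inball s X -> gyrodist s O X = r ->
    gammaV s O * gammaV s X * (1 - dot O X / s^+2) = c.
  by move=> hX hd; rewrite /c -hd; have [-> _] := gyro_gamma hs hO hX.
have [_ hrange] := gyro_gamma hs hO hA1.
rewrite hd1 in hrange.
have hc : 0 < c by apply: gammaR_gt0.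
set w := A3 - A2.
have eA2 : A2 = P + (- t0) *: w by rewrite hPt0 scaleNr -/w addrK.
have eA3 : A3 = P + (1 - t0) *: w.
  by rewrite hPt0 -/w scalerBl scale1r addrA addrAC addrK /w [A2 + _]addrC subrK.
have wn : w != 0.
  by apply/eqP => /eqP; rewrite subr_eq0 eq_sym (negbTE n23).
set w' := T2 - T1.
have [[_ [tA eA1T]] _] := (hTiff A1).2 erefl.
have eA1 : A1 = P + (tA - tP) *: w'.
  by rewrite eA1T hPtP -/w' -addrA -scalerDl [tP + _]addrC subrK.
have w'n : w' != 0.
  by apply/eqP => /eqP; rewrite subr_eq0 eq_sym (negbTE nT).
have [_ gP] := gammaV_prop hs hP.
have [_ gO] := gammaV_prop hs hO.
have dpos (u : 'rV[R]_n) : u != 0 -> 0 < dot u u.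
  move=> un; rewrite lt_neqAle dot_ge0 andbT eq_sym; apply/eqP => h.
  by move: un; rewrite (dot_eq0 h) eqxx.
have hk : 0 < lk s P w.
  rewrite /lk; apply: divr_gt0; last exact: exprn_gt0.
  by apply: mulr_gt0; [exact: exprn_gt0 | exact: dpos].
have hk' : 0 < lk s P w'.
  rewrite /lk; apply: divr_gt0; last exact: exprn_gt0.
  by apply: mulr_gt0; [exact: exprn_gt0 | exact: dpos].
set a := la s O P.
set b := lb s O P w. set m := lm s P w. set k := lk s P w.
set b' := lb s O P w'. set m' := lm s P w'. set k' := lk s P w'.
set t1 := tA - tP.
have [N1 C1 G1] := line_data hs hO hP hA1 eA1.
have [N2 C2 G2] := line_data hs hO hP hA2 eA2.
have [N3 C3 G3] := line_data hs hO hP hA3 eA3.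
rewrite circ // in C1. rewrite circ // in C2. rewrite circ // in C3.
have q1 := circ_sq N1 (esym C1).
(* tangency: double root *)
set D' := b'^+2 + c^+2 * k'.
have hD' : 0 < D'.
  have : 0 < c^+2 * k' by rewrite mulr_gt0 // exprn_gt0.
  rewrite /D'; have := sqr_ge0 b'; lra.
set t' := - (2 * (a * b' - c^+2 * m')) / D' - t1.
have ht' : D' * (t' + t1) + 2 * (a * b' - c^+2 * m') = 0.
  by rewrite /t'; field; rewrite gt_eqF.
have hq' : (a + b' * t')^+2 = c^+2 * (1 + 2 * m' * t' - k' * t'^+2).
  have e : (a + b' * t')^+2 - c^+2 * (1 + 2 * m' * t' - k' * t'^+2)
    = ((a + b' * t1)^+2 - c^+2 * (1 + 2 * m' * t1 - k' * t1^+2))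
      + (t' - t1) * (D' * (t' + t1) + 2 * (a * b' - c^+2 * m')).
    by rewrite /D'; ring.
  move: e; rewrite ht' mulr0 addr0 q1 subrr => /eqP; rewrite subr_eq0 => /eqP //.
set X' := P + t' *: w'.
have hN' := line_N hs hP (erefl X').
have hO' := line_O s O (erefl X').
rewrite -/m' -/k' in hN'. rewrite -/a -/b' in hO'.
have hX' : inball s X'.
  apply/(inballE hs).
  case: (ltrP (dot X' X') (s^+2)) => // hge.
  exfalso.
  have f1 : 1 - dot X' X' / s^+2 <= 0.
    rewrite subr_le0 ler_pdivlMr ?mul1r //; exact: s2_gt0.
  have f2 : 1 + 2 * m' * t' - k' * t'^+2 <= 0.
    rewrite hN' pmulr_rle0 // exprn_gt0 //.
  have f3 : c^+2 * (1 + 2 * m' * t' - k' * t'^+2) <= 0.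
    by rewrite pmulr_rle0 // exprn_gt0.
  have f4 : (a + b' * t')^+2 = 0 by have := sqr_ge0 (a + b' * t'); lra.
  have f5 : a + b' * t' = 0 by move/eqP: f4; rewrite sqrf_eq0 => /eqP.
  have f6 : 1 + 2 * m' * t' - k' * t'^+2 = 0.
    move: hq'; rewrite f4 => /esym/eqP; rewrite mulf_eq0 expf_eq0 /= (gt_eqF hc) /=.
    by move/eqP.
  have f7 : 1 - dot O X' / s^+2 = 0.
    move: hO'; rewrite f5 => /eqP; rewrite !mulf_eq0 (gt_eqF gO) (gt_eqF gP) /= => /eqP //.
  have f8 : 1 - dot X' X' / s^+2 = 0.
    move: hN'; rewrite f6 => /esym/eqP; rewrite mulf_eq0 expf_eq0 /= (gt_eqF gP) /=.
    by move/eqP.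
  have fz (z : R) : 1 - z / s^+2 = 0 -> z = s^+2.
    move=> h; have sn : s != 0 by rewrite gt_eqF.
    have -> : z = s^+2 * (z / s^+2) by field.
    have -> : z / s^+2 = 1 by lra.
    by rewrite mulr1.
  have e1 := fz _ f7.
  have e2 := fz _ f8.
  have := dot_le O X'. move/(inballE hs): hO => hO2. lra.
have [N' C' _] := line_data hs hO hP hX' (erefl X').
rewrite -/m' -/k' -/a -/b' in N' C'.
have hcX' : gammaV s O * gammaV s X' * (1 - dot O X' / s^+2) = c.
  apply: sq_uniq; last 1 first.
    by rewrite C' exprMn hq' mulrA mulrAC N' mul1r.
  - have [_ gX'] := gammaV_prop hs hX'.
    by rewrite !mulr_ge0 ?ltW ?(dot_lt hs).
  - exact: ltW.
have hdX' : gyrodist s O X' = r.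
  have [e1 e2] := gyro_gamma hs hO hX'.
  apply: (gammaR_inj hs) => //.
  by rewrite e1 hcX'.
have hX'A1 : X' = A1.
  apply/hTiff; split.
    split=> //; exists (tP + t'); by rewrite /X' hPtP -/w' -addrA -scalerDl.
  split=> //; apply: hTpl; split=> //; exists (tP + t').
  by rewrite /X' hPtP -/w' -addrA -scalerDl.
have ht1 : t' = t1.
  move: hX'A1; rewrite eA1 /X' => /addrI /eqP; rewrite -subr_eq0 -scalerBl scaler_eq0.
  by rewrite (negbTE w'n) orbF subr_eq0 => /eqP.
have htan : D' * t1 = - (a * b' - c^+2 * m').
  move: ht'; rewrite ht1 => h; lra.
have [gd1 rd1] := gyro_gamma hs hA1 hP.
have [gd2 rd2] := gyro_gamma hs hA2 hP.
have [gd3 rd3] := gyro_gamma hs hA3 hP.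
have [gd23 _] := gyro_gamma hs hA2 hA3.
rewrite -/d1 in gd1 rd1. rewrite -/d2 in gd2 rd2. rewrite -/d3 in gd3 rd3. rewrite -/d23 in gd23.
rewrite G1 in gd1. rewrite G2 in gd2. rewrite G3 in gd3.
rewrite (line_pair hs hP eA2 eA3) -/m -/k in gd23.
rewrite gd23 -exprMn.
have [_ gA2] := gammaV_prop hs hA2.
have [_ gA3] := gammaV_prop hs hA3.
apply: (@final_scalar R s a c m k b m' k' b' t1 (- t0) (1 - t0)
  (gammaV s A1 / gammaV s P) (gammaV s A2 / gammaV s P) (gammaV s A3 / gammaV s P)).
- exact: hs.
- exact: hc.
- exact: hk.
- exact: ltW.
- apply/eqP => h; lra.
- by rewrite divr_gt0.
- exact: N2.
- by rewrite C2.
- by rewrite divr_gt0.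
- exact: N3.
- by rewrite C3.
- exact: N1.
- by rewrite C1.
- exact: htan.
- by rewrite -gd1 gammaR_sq.
- by rewrite mulr_ge0 //; [apply: ltW; apply: gammaR_gt0 | case/andP: rd2].
- by rewrite -gd2 gammaR_sq.
- by rewrite mulr_ge0 //; [apply: ltW; apply: gammaR_gt0 | case/andP: rd3].
- by rewrite -gd3 gammaR_sq.
Qed.
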